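(* Let $V$ be a finite-dimensional vector space over a division ring, and let $k_1,k_2$ be integers with $1<k_1<\dim V-1$ and $k_1+k_2=\dim V$. Then $$\mathcal{H}_{k_1,k_2}(V)=\{(U_1,U_2)\in\mathrm{Sub}_{k_1}(V)\times\mathrm{Sub}_{k_2}(V): \dim(U_1\cap U_2)>0\}$$ is a non-degenerate, non-spiky hyperplane of the Segre product $\mathbf{P}_{k_1}(V)\otimes\mathbf{P}_{k_2}(V)$.
   Context: $\mathrm{Sub}_m(V)$ is the set of $m$-dimensional subspaces of $V$. The Grassmann space $\mathbf{P}_m(V)$ has points $\mathrm{Sub}_m(V)$ and lines the pencils $\{U\in\mathrm{Sub}_m(V):H\subseteq U\subseteq B\}$ for $H\in\mathrm{Sub}_{m-1}(V)$, $B\in\mathrm{Sub}_{m+1}(V)$, $H\subseteq B$. Segre product of two partial linear spaces $(S_1,\mathcal{L}_1),(S_2,\mathcal{L}_2)$: points $S_1\times S_2$, lines $l\times\{b\}$ and $\{a\}\times m$ with $l\in\mathcal{L}_1$, $m\in\mathcal{L}_2$. Points are collinear if on a common line. Subspace: any line meeting it in at least two points lies in it; hyperplane: proper subspace meeting every line; a set $X$ is spiky if every point of $X$ is collinear with some point outside $X$. For $\mathcal{H}\subseteq S_1\times S_2$ and $a=(a_1,a_2)$: $\mathcal{H}^{[a]}_1=\{x:(x,a_2)\in\mathcal{H}\}$, $\mathcal{H}^{[a]}_2=\{y:(a_1,y)\in\mathcal{H}\}$; a hyperplane $\mathcal{H}$ is non-degenerate if all these sets are hyperplanes of the respective factors.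 *)

(* Defs.v *)
From HB Require Import structures.
From mathcomp Require Import all_boot all_order all_algebra.
Set Implicit Arguments. Unset Strict Implicit. Unset Printing Implicit Defensive.
Import GRing.Theory.
Local Open Scope ring_scope.

Definition is_division_ring (K : unitRingType) : Prop :=
  forall x : K, x != 0 -> x \is a GRing.unit.

Section LinAlg.
Variables (K : unitRingType) (V : lmodType K).

Definition lincomb (m : nat) (v : 'I_m -> V) (c : 'I_m -> K) : V :=
  \sum_(i < m) c i *: v i.

Definition lin_indep (m : nat) (v : 'I_m -> V) : Prop :=
  forall c : 'I_m -> K, lincomb v c = 0 -> forall i, c i = 0.

Definition spans (U : V -> Prop) (m : nat) (v : 'I_m -> V) : Prop :=
  forall x, U x <-> exists c, x = lincomb v c.

Definition has_dim (U : V -> Prop) (m : nat) : Prop :=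
  exists v : 'I_m -> V, lin_indep v /\ spans U v.

Definition Sub (m : nat) := {U : V -> Prop | has_dim U m}.

Definition incl (A B : V -> Prop) : Prop := forall x, A x -> B x.

Definition gr_line (m : nat) (l : Sub m -> Prop) : Prop :=
  exists (H B : V -> Prop), has_dim H m.-1 /\ has_dim B m.+1 /\ incl H B /\
    forall U : Sub m, l U <-> (incl H (sval U) /\ incl (sval U) B).
End LinAlg.
Arguments gr_line {K V} m l.
Arguments Sub {K} V m.

Section PLS.
Variables (P : Type) (L : (P -> Prop) -> Prop).

Definition collinear (p q : P) : Prop := exists l, L l /\ l p /\ l q.

Definition is_subspace (X : P -> Prop) : Prop :=
  forall l, L l -> (exists p q, p <> q /\ l p /\ l q /\ X p /\ X q) ->
    forall r, l r -> X r.

Definition is_hyperplane (X : P -> Prop) : Prop :=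
  is_subspace X /\ (exists p, ~ X p) /\ (forall l, L l -> exists p, l p /\ X p).

Definition spiky (X : P -> Prop) : Prop :=
  forall p, X p -> exists q, ~ X q /\ collinear p q.
End PLS.

Section Segre.
Variables (P1 P2 : Type) (L1 : (P1 -> Prop) -> Prop) (L2 : (P2 -> Prop) -> Prop).

Definition segre_line (l : P1 * P2 -> Prop) : Prop :=
  (exists l1 b, L1 l1 /\ forall x, l x <-> (l1 x.1 /\ x.2 = b)) \/
  (exists a l2, L2 l2 /\ forall x, l x <-> (x.1 = a /\ l2 x.2)).

Definition section1 (H : P1 * P2 -> Prop) (a : P1 * P2) : P1 -> Prop :=
  fun x => H (x, a.2).
Definition section2 (H : P1 * P2 -> Prop) (a : P1 * P2) : P2 -> Prop :=
  fun y => H (a.1, y).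

Definition non_degenerate (H : P1 * P2 -> Prop) : Prop :=
  is_hyperplane segre_line H /\
  forall a, is_hyperplane L1 (section1 H a) /\ is_hyperplane L2 (section2 H a).
End Segre.

Definition Hk {K : unitRingType} {V : lmodType K} {k1 k2 : nat}
  (x : Sub V k1 * Sub V k2) : Prop :=
  exists d, (0 < d)%N /\ has_dim (fun v => sval x.1 v /\ sval x.2 v) d.

(* Main.v *)
Require Import Defs.
From HB Require Import structures.
From mathcomp Require Import all_boot all_order all_algebra zify.
From Stdlib Require Import Classical ClassicalEpsilon FunctionalExtensionality PropExtensionality ProofIrrelevance.
Set Implicit Arguments. Unset Strict Implicit. Unset Printing Implicit Defensive.
Import GRing.Theory.
Local Open Scope ring_scope.

Section LA.
Variables (K : unitRingType) (V : lmodType K).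
Hypothesis hK : is_division_ring K.

Definition lc (I : finType) (v : I -> V) (c : I -> K) : V := \sum_(i : I) c i *: v i.
Definition sp (I : finType) (v : I -> V) (x : V) := exists c, x = lc v c.
Definition ind (I : finType) (v : I -> V) := forall c, lc v c = 0 -> forall i, c i = 0.
Definition sumf (I J : finType) (v : I -> V) (u : J -> V) : (I + J)%type -> V :=
  fun s => match s with inl i => v i | inr j => u j end.
Definition ext (I : finType) (v : I -> V) (x : V) := sumf v (fun _ : 'I_1 => x).
Definition closed (S : V -> Prop) :=
  S 0 /\ (forall x y, S x -> S y -> S (x + y)) /\ (forall a x, S x -> S (a *: x)).

Lemma lc_sum (I J : finType) (v : I -> V) (u : J -> V) c :
  lc (sumf v u) c = lc v (fun i => c (inl i)) + lc u (fun j => c (inr j)).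
Proof. by rewrite /lc big_sumType. Qed.

Lemma lc_ext (I : finType) (v : I -> V) x c :
  lc (ext v x) c = lc v (fun i => c (inl i)) + c (inr ord0) *: x.
Proof. by rewrite /ext lc_sum /lc big_ord1. Qed.

Lemma lc0 (I : finType) (v : I -> V) : lc v (fun _ => 0) = 0.
Proof. by rewrite /lc big1 // => i _; rewrite scale0r. Qed.

Lemma lc_ord0 (v : 'I_0 -> V) c : lc v c = 0.
Proof. by rewrite /lc big_ord0. Qed.

Lemma lcD (I : finType) (v : I -> V) c d : lc v c + lc v d = lc v (fun i => c i + d i).
Proof. by rewrite /lc -big_split; apply: eq_bigr => i _; rewrite scalerDl. Qed.

Lemma lcZ (I : finType) (v : I -> V) a c : a *: lc v c = lc v (fun i => a * c i).
Proof. by rewrite /lc scaler_sumr; apply: eq_bigr => i _; rewrite scalerA. Qed.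

Lemma lcN (I : finType) (v : I -> V) c : - lc v c = lc v (fun i => - c i).
Proof. by rewrite /lc -sumrN; apply: eq_bigr => i _; rewrite scaleNr. Qed.

Lemma lc_delta (I : finType) (v : I -> V) i : lc v (fun j => (j == i)%:R) = v i.
Proof.
rewrite /lc (bigD1 i) //= eqxx scale1r big1 ?addr0 // => j /negPf ->.
by rewrite scale0r.
Qed.

Lemma sp_closed (I : finType) (v : I -> V) : closed (sp v).
Proof.
split; first by exists (fun _ => 0); rewrite lc0.
split; first by move=> x y [c ->] [d ->]; exists (fun i => c i + d i); rewrite lcD.
by move=> a x [c ->]; exists (fun i => a * c i); rewrite lcZ.
Qed.

Lemma closed_lc (S : V -> Prop) (I : finType) (v : I -> V) c :
  closed S -> (forall i, S (v i)) -> S (lc v c).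
Proof.
move=> [S0 [SD SZ]] Sv; rewrite /lc; elim/big_ind: _ => //.
by move=> i _; apply: SZ.
Qed.

Lemma closed_sp (S : V -> Prop) (I : finType) (v : I -> V) x :
  closed S -> (forall i, S (v i)) -> sp v x -> S x.
Proof. by move=> cS Sv [c ->]; apply: closed_lc. Qed.

Lemma closedB (S : V -> Prop) a x y : closed S -> S x -> S y -> S (y - a *: x).
Proof. by move=> [S0 [SD SZ]] Sx Sy; rewrite -scaleNr; apply: SD => //; apply: SZ. Qed.

Lemma sp_self (I : finType) (v : I -> V) i : sp v (v i).
Proof. by exists (fun j => (j == i)%:R); rewrite lc_delta. Qed.

Lemma ind_nz (I : finType) (v : I -> V) i : ind v -> v i != 0.
Proof.
move=> hv; apply/eqP => vi0.
have := hv (fun j => (j == i)%:R); rewrite lc_delta => /(_ vi0 i).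
by rewrite eqxx; move/eqP; rewrite oner_eq0.
Qed.

Lemma unitP (a : K) : a != 0 -> a^-1 * a = 1.
Proof. by move=> /hK; apply: mulVr. Qed.

Lemma ind_ext (I : finType) (v : I -> V) x : ind v -> ~ sp v x -> ind (ext v x).
Proof.
move=> hv nx c; rewrite lc_ext => h.
have c0 : c (inr ord0) = 0.
  apply/eqP; apply/negP => /negP hc; apply: nx.
  exists (fun i => - ((c (inr ord0))^-1 * c (inl i))).
  rewrite -lcN -lcZ.
  have -> : lc v (fun i => c (inl i)) = - (c (inr ord0) *: x).
    by apply/eqP; rewrite -addr_eq0 h.
  by rewrite scalerN opprK scalerA unitP // scale1r.
move: h; rewrite c0 scale0r addr0 => /hv h.
by case=> [i|j]; [apply: h | rewrite (ord1 j)].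
Qed.

Lemma sp_ext_l (I : finType) (v : I -> V) x y : sp v y -> sp (ext v x) y.
Proof.
move=> [c ->]; exists (fun s => match s with inl i => c i | inr _ => 0 end).
by rewrite lc_ext scale0r addr0.
Qed.

Lemma sp_ext_r (I : finType) (v : I -> V) x : sp (ext v x) x.
Proof. exact: (sp_self (ext v x) (inr ord0)). Qed.


Lemma steinitz (I J : finType) (w : J -> V) (v : I -> V) n :
  forall (P : pred J) (Q : pred I) (a : I -> J -> K), #|P| = n -> (n < #|Q|)%N ->
  (forall i, Q i -> v i = \sum_(j | P j) a i j *: w j) ->
  exists c : I -> K, \sum_(i | Q i) c i *: v i = 0 /\ exists i, Q i /\ c i != 0.
Proof.
elim: n v => [|n IH] v P Q a hP hQ hv.
  have [i0 Qi0] := card_gt0P hQ.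
  have P0 := card0_eq hP.
  have vi0 : v i0 = 0 by rewrite hv // big_pred0 // => j; rewrite -[P j]/(j \in P) P0.
  exists (fun i => (i == i0)%:R); split; last by exists i0; rewrite eqxx oner_eq0.
  rewrite (bigD1 i0) //= eqxx scale1r vi0 add0r big1 // => i /andP[_ /negPf ->].
  by rewrite scale0r.
have [j0 Pj0] : exists j0, j0 \in P by apply/card_gt0P; rewrite hP.
have hP' : #|[predD1 P & j0]| = n by move: hP; rewrite (cardD1 j0) Pj0 add1n => -[].
case: (boolP [forall i, Q i ==> (a i j0 == 0)]) => [/forallP ha | /forallPn [i0]].
  apply: (IH v [predD1 P & j0] Q a hP' (ltnW hQ)) => i Qi.
  rewrite hv // (bigD1 j0) //= (eqP (implyP (ha i) Qi)) scale0r add0r.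
  by apply: eq_bigl => j; rewrite andbC.
rewrite negb_imply => /andP[Qi0 ai0].
pose t i := a i j0 * (a i0 j0)^-1.
pose v' i := v i - t i *: v i0.
pose a' i j := a i j - t i * a i0 j.
have hQ' : (n < #|[predD1 Q & i0]|)%N.
  by move: hQ; rewrite (cardD1 i0) [i0 \in Q]Qi0 add1n ltnS.
have hv' : forall i, [predD1 Q & i0] i -> v' i = \sum_(j | [predD1 P & j0] j) a' i j *: w j.
  move=> i; rewrite inE /= => /andP[_ Qi].
  rewrite /v' (hv _ Qi0) (hv i) // scaler_sumr -sumrB.
  rewrite (bigD1 j0) //= scalerA /t -mulrA unitP // mulr1 subrr add0r.
  apply: eq_big => [j|j _]; first by rewrite andbC.
  by rewrite /a' scalerBl scalerA.
have [c' [hc' [i1 [Q'i1 ci1]]]] := IH v' _ _ a' hP' hQ' hv'.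
exists (fun i => if i == i0 then - \sum_(i | [predD1 Q & i0] i) c' i * t i else c' i).
split; last first.
  move: Q'i1; rewrite inE /= => /andP[ne Qi1].
  by exists i1; rewrite (negPf ne).
have e1 : \sum_(i | [predD1 Q & i0] i) c' i *: v' i = \sum_(i | [predD1 Q & i0] i) c' i *: v i
   - (\sum_(i | [predD1 Q & i0] i) c' i * t i) *: v i0.
  by rewrite scaler_suml -sumrB; apply: eq_bigr => i _; rewrite /v' scalerBr scalerA.
rewrite (bigD1 i0) //= eqxx scaleNr addrC.
have -> : \sum_(i | Q i && (i != i0)) (if i == i0 then - \sum_(i | [predD1 Q & i0] i) c' i * t i else c' i) *: v i
   = \sum_(i | [predD1 Q & i0] i) c' i *: v i.
  apply: eq_big => [i|i]; first by rewrite andbC.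
  by move=> /andP[_ /negPf ->].
by rewrite -e1.
Qed.

Lemma card_le (I J : finType) (v : I -> V) (w : J -> V) :
  ind v -> (forall i, sp w (v i)) -> (#|I| <= #|J|)%N.
Proof.
move=> hv H.
pose a i := proj1_sig (constructive_indefinite_description _ (H i)).
have ha i : v i = lc w (a i) := proj2_sig (constructive_indefinite_description _ (H i)).
rewrite leqNgt; apply/negP => hlt.
have [c [hc [i [_ ci]]]] := @steinitz I J w v #|J| (fun _ => true) (fun _ => true) a
  (eq_card (fun _ => erefl)) hlt (fun i _ => ha i).
by move: ci; rewrite (hv c hc i) eqxx.
Qed.

Lemma card_sum_ord m k : #|{: 'I_m + 'I_k}| = (m + k)%N.
Proof. by rewrite card_sum !card_ord. Qed.

Lemma has_dim_sp (U : V -> Prop) m : has_dim U m ->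
  exists v : 'I_m -> V, ind v /\ forall x, U x <-> sp v x.
Proof. by []. Qed.

Lemma has_dimI (U : V -> Prop) (I : finType) (v : I -> V) :
  ind v -> (forall x, U x <-> sp v x) -> has_dim U #|I|.
Proof.
move=> hv hU.
have [g fK gK] := enum_val_bij I.
have E : forall c : I -> K, lc v c = lc (fun k : 'I_#|I| => v (enum_val k)) (fun k : 'I_#|I| => c (enum_val k)).
  move=> cc; rewrite /lc.
  have := big_enum_val (A := predT) (fun i => cc i *: v i).
  move=> <-; apply: eq_bigl => i; by rewrite inE.
exists (fun k : 'I_#|I| => v (enum_val k)); split.
  move=> c hc k.
  have := hv (fun i => c (g i)).
  rewrite E.
  have -> : lc (fun k : 'I_#|I| => v (enum_val k)) (fun k => c (g (enum_val k))) = 0.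
    by rewrite -hc; apply: eq_bigr => i _; rewrite fK.
  by move=> /(_ erefl (enum_val k)); rewrite fK.
move=> x; rewrite hU; split => [[c ->]|[c ->]].
  by exists (fun k : 'I_#|I| => c (enum_val k)); rewrite E.
exists (fun i => c (g i)); rewrite E; apply: eq_bigr => i _; rewrite fK //.
Qed.

Lemma has_dim_closed (U : V -> Prop) m : has_dim U m -> closed U.
Proof.
move=> [v [_ hU]]; have [S0 [SD SZ]] := sp_closed v.
split; first by apply/hU.
split; first by move=> x y /hU ? /hU ?; apply/hU; apply: SD.
by move=> a x /hU ?; apply/hU; apply: SZ.
Qed.


Lemma ind_sum_assoc (I1 I2 I3 : finType) (a : I1 -> V) (b : I2 -> V) (c : I3 -> V) :
  ind (sumf (sumf a b) c) -> ind (sumf a (sumf b c)).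
Proof.
move=> h d hd.
pose d' (s : ((I1 + I2) + I3)%type) := match s with
  | inl (inl i) => d (inl i) | inl (inr j) => d (inr (inl j)) | inr k => d (inr (inr k)) end.
have : lc (sumf (sumf a b) c) d' = 0.
  by rewrite -hd !lc_sum addrA.
move=> /h H; case=> [i|[j|k]]; [exact: (H (inl (inl i))) | exact: (H (inl (inr j))) | exact: (H (inr k))].
Qed.

Lemma sp_sum_assoc (I1 I2 I3 : finType) (a : I1 -> V) (b : I2 -> V) (c : I3 -> V) x :
  sp (sumf (sumf a b) c) x <-> sp (sumf a (sumf b c)) x.
Proof.
split=> -[d ->].
  exists (fun s => match s with
    | inl i => d (inl (inl i)) | inr (inl j) => d (inl (inr j)) | inr (inr k) => d (inr k) end).
  by rewrite !lc_sum addrA.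
exists (fun s => match s with
  | inl (inl i) => d (inl i) | inl (inr j) => d (inr (inl j)) | inr k => d (inr (inr k)) end).
by rewrite !lc_sum addrA.
Qed.

Lemma ord0_elim (P : Prop) (j : 'I_0) : P.
Proof. by case: j. Qed.

Section Basis.
Variables (n : nat) (e : 'I_n -> V).
Hypotheses (he : ind e) (hes : forall x, sp e x).

Lemma card_leV (I : finType) (v : I -> V) : ind v -> (#|I| <= n)%N.
Proof. by move=> hv; rewrite -(card_ord n); apply: card_le hv _ => i; apply: hes. Qed.

Lemma card_geV (I : finType) (v : I -> V) : (forall x, sp v x) -> (n <= #|I|)%N.
Proof. by move=> hv; rewrite -(card_ord n); apply: card_le he _ => i; apply: hv. Qed.

Lemma full_span (S : V -> Prop) m (I : finType) (v : I -> V) :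
  has_dim S m -> ind v -> #|I| = m -> (forall i, S (v i)) -> forall x, S x -> sp v x.
Proof.
move=> [b [hb hS]] hv hI Sv x Sx; apply: NNPP => nx.
have hc : (#|{: I + 'I_1}| <= #|'I_m|)%N.
  apply: (card_le (w := b) (ind_ext hv nx)); case=> [i|j] /=; apply/hS; [exact: Sv|exact: Sx].
by move: hc; rewrite card_sum !card_ord hI; lia.
Qed.

Lemma exists_out (H B : V -> Prop) a b :
  has_dim H a -> has_dim B b -> (a < b)%N -> exists x, B x /\ ~ H x.
Proof.
move=> [h [hh hH]] [bb [hb hB]] lt; apply: NNPP => nex.
have : (b <= a)%N.
  rewrite -(card_ord b) -(card_ord a); apply: (card_le hb) => i.
  apply/hH; apply: NNPP => nH; apply: nex; exists (bb i); split => //.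
  by apply/hB; apply: sp_self.
by rewrite leqNgt lt.
Qed.

Lemma extend (S : V -> Prop) : closed S -> forall t (I : finType) (v : I -> V),
  (n - #|I| <= t)%N -> ind v -> (forall i, S (v i)) ->
  exists (J : finType) (u : J -> V), (forall j, S (u j)) /\ ind (sumf v u) /\
     (forall x, S x <-> sp (sumf v u) x).
Proof.
move=> cS; elim=> [|t IH] I v ht hv Sv;
  (case: (classic (forall x, S x -> sp v x)) => [hall|hnot]).
- exists ('I_0 : finType), (fun _ => 0); split; first by case.
  split.
    move=> c; rewrite lc_sum lc_ord0 addr0 => /hv h; case=> [i|j]; [exact: h|exact: ord0_elim].
  move=> x; split.
    move=> /hall [c ->]; exists (fun s => match s with inl i => c i | inr _ => 0 end).
    by rewrite lc_sum lc_ord0 addr0.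
  by move=> hx; apply: (closed_sp cS _ hx); case=> [i|j]; [exact: Sv|exact: ord0_elim].
- exfalso; have [x [Sx nx]] : exists x, S x /\ ~ sp v x.
    by apply: NNPP => H; apply: hnot => x Sx; apply: NNPP => nx; apply: H; exists x.
  have := card_leV (ind_ext hv nx); rewrite card_sum card_ord addn1.
  by move: ht; lia.
- exists ('I_0 : finType), (fun _ => 0); split; first by case.
  split.
    move=> c; rewrite lc_sum lc_ord0 addr0 => /hv h; case=> [i|j]; [exact: h|exact: ord0_elim].
  move=> x; split.
    move=> /hall [c ->]; exists (fun s => match s with inl i => c i | inr _ => 0 end).
    by rewrite lc_sum lc_ord0 addr0.
  by move=> hx; apply: (closed_sp cS _ hx); case=> [i|j]; [exact: Sv|exact: ord0_elim].
- have [x [Sx nx]] : exists x, S x /\ ~ sp v x.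
    by apply: NNPP => H; apply: hnot => y Sy; apply: NNPP => ny; apply: H; exists y.
  have hv' := ind_ext hv nx.
  have := card_leV hv'; rewrite card_sum card_ord addn1 => hlt.
  have ht' : (n - #|{: I + 'I_1}| <= t)%N.
    rewrite card_sum card_ord addn1; move: ht hlt; clear; lia.
  have Sv' : forall s, S (ext v x s) by case=> [i|j] /=; [exact: Sv|exact: Sx].
  have [J [u [Su [hind hsp]]]] := IH _ _ ht' hv' Sv'.
  exists (('I_1 + J)%type : finType), (sumf (fun _ => x) u); split.
    by case=> [j|j] /=; [exact: Sx|exact: Su].
  split; first exact: ind_sum_assoc.
  by move=> y; rewrite hsp sp_sum_assoc.
Qed.


Lemma ind_ord0 (v : 'I_0 -> V) : ind v.
Proof. by move=> c _ j; exact: ord0_elim. Qed.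

Lemma dim_exists (S : V -> Prop) : closed S -> exists m, has_dim S m.
Proof.
move=> cS.
have [J [u [Su [hind hsp]]]] := @extend S cS n _ (fun _ : 'I_0 => 0) (leq_subr _ _) (@ind_ord0 _)
  (fun j => ord0_elim _ j).
by exists #|{: 'I_0 + J}|; apply: has_dimI hind hsp.
Qed.

Lemma complement (W : V -> Prop) k m : has_dim W k -> (m + k = n)%N ->
  exists U, has_dim U m /\ forall x, U x -> W x -> x = 0.
Proof.
move=> [w [hw hW]] hmk.
have cT : closed (fun _ => True) by [].
have [J [u [_ [hind hsp]]]] := @extend _ cT n _ w (leq_subr _ _) hw (fun _ => I).
have c1 := card_leV hind.
have c2 : (n <= #|{: 'I_k + J}|)%N by apply: card_geV => x; apply/hsp.
rewrite card_sum card_ord in c1 c2.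
have hJ : #|J| = m by lia.
have hu : ind u.
  move=> c hc j.
  have := hind (fun s => match s with inl _ => 0 | inr j => c j end).
  rewrite lc_sum /= lc0 add0r hc => /(_ erefl (inr j)); done.
exists (sp u); split; first by rewrite -hJ; apply: has_dimI hu _.
move=> x [c ->] /hW [d hd].
have : lc (sumf w u) (fun s => match s with inl i => - d i | inr j => c j end) = 0.
  by rewrite lc_sum /= -lcN hd addNr.
move=> /hind h0.
rewrite -(lc0 u); apply: eq_bigr => j _; by rewrite (h0 (inr j)).
Qed.

Lemma extend_dim m : (m <= n)%N -> forall t (I : finType) (v : I -> V),
  (m - #|I| <= t)%N -> ind v -> (#|I| <= m)%N -> exists U, has_dim U m /\ forall i, U (v i).
Proof.
move=> hmn; elim=> [|t IH] I v ht hv hI; (case: (eqVneq #|I| m) => [eq|ne]).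
- exists (sp v); split; first by rewrite -eq; apply: (has_dimI hv).
  by move=> i; apply: sp_self.
- exfalso; move: ht hI ne; clear; move=> ht hI /eqP ne; lia.
- exists (sp v); split; first by rewrite -eq; apply: (has_dimI hv).
  by move=> i; apply: sp_self.
- have [x nx] : exists x, ~ sp v x.
    apply: NNPP => H; have := card_geV (v := v) (fun x => NNPP _ (fun nx => H (ex_intro _ x nx))).
    move: hI hmn ne; clear; move=> hI hmn /eqP ne; lia.
  have hv' := ind_ext hv nx.
  have h1 : (m - #|{: I + 'I_1}| <= t)%N.
    rewrite card_sum card_ord; move: ht hI ne; clear; move=> ht hI /eqP ne; lia.
  have h2 : (#|{: I + 'I_1}| <= m)%N.
    rewrite card_sum card_ord; move: hI ne; clear; move=> hI /eqP ne; lia.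
  have [U [hU Uv]] := IH _ _ h1 hv' h2.
  exists U; split => // i; exact: (Uv (inl i)).
Qed.

Lemma point_exists m : (m <= n)%N -> exists U : V -> Prop, has_dim U m.
Proof.
move=> hm; have [U [hU _]] := @extend_dim m hm m _ (fun _ : 'I_0 => 0) (leq_subr _ _)
  (@ind_ord0 _) ltac:(by rewrite card_ord).
by exists U.
Qed.

End Basis.

Definition meet (U W : V -> Prop) := exists x, x != 0 /\ U x /\ W x.

Lemma closed_inter (U W : V -> Prop) : closed U -> closed W -> closed (fun v => U v /\ W v).
Proof.
move=> [U0 [UD UZ]] [W0 [WD WZ]]; split => //; split.
  by move=> x y [? ?] [? ?]; split; [apply: UD|apply: WD].
by move=> a x [? ?]; split; [apply: UZ|apply: WZ].
Qed.

Lemma Hk_iff n (e : 'I_n -> V) (he : ind e) (hes : forall x, sp e x) (k1 k2 : nat)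
  (p : Defs.Sub V k1 * Defs.Sub V k2) : Hk p <-> meet (sval p.1) (sval p.2).
Proof.
split.
  move=> [d [hd [f [hf hS]]]].
  exists (f (Ordinal hd)); split; first exact: ind_nz.
  by apply/hS; apply: sp_self.
move=> [x [nx [x1 x2]]].
have cI := closed_inter (has_dim_closed (svalP p.1)) (has_dim_closed (svalP p.2)).
have [d hd] := dim_exists hes cI.
exists d; split => //.
case: d hd => // -[f [hf hS]].
have : sp f x by apply/hS.
move=> [c hc]; move: nx; rewrite hc lc_ord0 eqxx //.
Qed.


Section Geom.
Variables (n : nat) (e : 'I_n -> V).
Hypotheses (he : ind e) (hes : forall x, sp e x).

Lemma card_pred m : (0 < m)%N -> #|{: 'I_m.-1 + 'I_1}| = m.
Proof. by move=> m0; rewrite card_sum !card_ord addn1 prednK. Qed.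

Lemma pencil_sub m (H B W U U' U'' : V -> Prop) : (0 < m)%N ->
  has_dim H m.-1 -> has_dim B m.+1 -> has_dim U m -> has_dim U' m -> has_dim U'' m ->
  incl H U -> incl H U' -> incl H U'' -> incl U B -> incl U' B -> incl U'' B ->
  closed W -> ~ (forall x, U x <-> U' x) -> meet U W -> meet U' W -> meet U'' W.
Proof.
move=> m0 hH hB hU hU' hU'' HU HU' HU'' UB U'B U''B cW nUU'
  [x [nx [Ux Wx]]] [y [ny [U'y Wy]]].
have [z [Bz nz]] := exists_out hU'' hB (ltnSn m).
have [b [hb hbU]] := hU''.
have nz' : ~ sp b z by move/hbU.
have hbz := ind_ext hb nz'.
have fs : forall w, B w -> sp (ext b z) w.
  apply: (full_span hB hbz); first by rewrite card_sum !card_ord addn1.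
  by case=> [i|j] /=; [apply: U''B; apply/hbU; apply: sp_self | exact: Bz].
have dec : forall w, B w -> exists p a, U'' p /\ w = p + a *: z.
  move=> w /fs [c ->]; rewrite lc_ext; exists (lc b (fun i => c (inl i))), (c (inr ord0)).
  by split => //; apply/hbU; exists (fun i => c (inl i)).
have [p [a [U''p ex]]] := dec x (UB x Ux).
have [q [a' [U''q ey]]] := dec y (U'B y U'y).
case: (eqVneq a 0) => [a0|an0].
  by exists x; split => //; split => //; rewrite ex a0 scale0r addr0.
pose t := a' * a^-1.
have ey' : y - t *: x = q - t *: p.
  rewrite ex ey scalerDr scalerA /t -mulrA unitP // mulr1.
  by rewrite opprD addrACA subrr addr0.
have W' : W (y - t *: x) := closedB t cW Wx Wy.
have U''' : U'' (q - t *: p) := closedB t (has_dim_closed hU'') U''p U''q.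
case: (eqVneq (y - t *: x) 0) => [e0|en0]; last first.
  by exists (y - t *: x); split => //; split => //; rewrite ey'.
have yeq : y = t *: x by apply: subr0_eq.
have Uy : U y by rewrite yeq; apply: (has_dim_closed hU).2.2.
case: (classic (H y)) => Hy.
  by exists y; split => //; split => //; apply: HU''.
exfalso; apply: nUU'.
have [h [hh hhH]] := hH.
have nhy : ~ sp h y by move/hhH.
have hhy := ind_ext hh nhy.
have fsU : forall w, U w -> sp (ext h y) w.
  apply: (full_span hU hhy (card_pred m0)).
  by case=> [i|j] /=; [apply: HU; apply/hhH; apply: sp_self | exact: Uy].
have fsU' : forall w, U' w -> sp (ext h y) w.
  apply: (full_span hU' hhy (card_pred m0)).
  by case=> [i|j] /=; [apply: HU'; apply/hhH; apply: sp_self | exact: U'y].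
move=> w; split => Hw.
  apply: (closed_sp (has_dim_closed hU') _ (fsU w Hw)).
  by case=> [i|j] /=; [apply: HU'; apply/hhH; apply: sp_self | exact: U'y].
apply: (closed_sp (has_dim_closed hU) _ (fsU' w Hw)).
by case=> [i|j] /=; [apply: HU; apply/hhH; apply: sp_self | exact: Uy].
Qed.

Lemma pencil_meet m k (H B W : V -> Prop) : (0 < m)%N -> (m + k = n)%N ->
  has_dim H m.-1 -> has_dim B m.+1 -> incl H B -> has_dim W k ->
  exists U, has_dim U m /\ incl H U /\ incl U B /\ meet U W.
Proof.
move=> m0 hmk hH hB HB hW.
have [b [hb hbB]] := hB.
have [w [hw hwW]] := hW.
have nind : ~ ind (sumf b w).
  by move=> hi; have := card_leV hes hi; rewrite card_sum !card_ord; lia.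
have [c [hc [s cs]]] : exists c, lc (sumf b w) c = 0 /\ exists s, c s != 0.
  apply: NNPP => H'; apply: nind => c hc s; apply: NNPP => ns.
  by apply: H'; exists c; split => //; exists s; apply/eqP.
pose z := lc b (fun i => c (inl i)).
have Bz : B z by apply/hbB; exists (fun i => c (inl i)).
have Wz : W z.
  apply/hwW; exists (fun j => - c (inr j)).
  change (z = lc w (fun j => - c (inr j))).
  have -> : lc w (fun j => - c (inr j)) = - lc w (fun j => c (inr j)) by rewrite lcN.
  apply/eqP.
  by rewrite -addr_eq0 -lc_sum hc.
have nz : z != 0.
  apply/eqP => z0.
  have h1 : forall i, c (inl i) = 0 by apply: hb.
  move: hc; rewrite lc_sum -/z z0 add0r => /hw h2.
  by move: cs; case: s => [i|j]; rewrite ?h1 ?h2 eqxx.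
have [y [By [nHy hy]]] : exists y, B y /\ ~ H y /\ (H z \/ y = z).
  case: (classic (H z)) => Hz.
    have [y [By nHy]] := exists_out hH hB (leq_ltn_trans (leq_pred m) (ltnSn m)).
    by exists y; split => //; split => //; left.
  by exists z; split => //; split => //; right.
have [h [hh hhH]] := hH.
have hhy := ind_ext hh (fun s => nHy (proj2 (hhH y) s)).
exists (sp (ext h y)); split.
  by have := has_dimI hhy (fun x => iff_refl _); rewrite card_pred.
split; first by move=> x /hhH hx; apply: sp_ext_l.
split.
  move=> x; apply: closed_sp (has_dim_closed hB) _.
  by case=> [i|j] /=; [apply: HB; apply/hhH; apply: sp_self | exact: By].
exists z; split => //; split => //.
case: hy => [/hhH hz|->]; [exact: sp_ext_l | exact: sp_ext_r].
Qed.

Lemma hyper_meet m (H U W : V -> Prop) x y : (0 < m)%N ->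
  has_dim H m.-1 -> has_dim U m -> incl H U -> closed W -> U x -> U y -> W x -> W y ->
  x != 0 -> (forall a, y != a *: x) -> meet H W.
Proof.
move=> m0 hH hU HU cW Ux Uy Wx Wy nx nyx.
case: (classic (H x)) => Hx; first by exists x.
have [h [hh hhH]] := hH.
have hhx := ind_ext hh (fun s => Hx (proj2 (hhH x) s)).
have fsU : forall w, U w -> sp (ext h x) w.
  apply: (full_span hU hhx (card_pred m0)).
  by case=> [i|j] /=; [apply: HU; apply/hhH; apply: sp_self | exact: Ux].
have [c hc] := fsU y Uy.
move: hc; rewrite lc_ext => hc.
exists (y - c (inr ord0) *: x); split.
  apply/eqP => /subr0_eq yeq; move: (nyx (c (inr ord0))); by rewrite yeq eqxx.
split; last exact: closedB.
apply/hhH; exists (fun i => c (inl i)).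
by rewrite hc addrK.
Qed.


Lemma Sub_ext m (p q : Defs.Sub V m) : (forall x, sval p x <-> sval q x) -> p = q.
Proof.
case: p q => [U hU] [U' hU'] /= h.
have E : U = U' by apply: functional_extensionality => x; apply: propositional_extensionality.
subst U'; f_equal; apply: proof_irrelevance.
Qed.

Lemma sec_hyper m k (W : V -> Prop) : (0 < m)%N -> (m + k = n)%N -> has_dim W k ->
  is_hyperplane (@gr_line K V m) (fun p : Defs.Sub V m => meet (sval p) W).
Proof.
move=> m0 hmk hW; split.
  move=> l [H [B [hH [hB [HB hl]]]]] [p [q [pq [lp [lq [Mp Mq]]]]]] r lr.
  move/hl: lp => [Hp pB]; move/hl: lq => [Hq qB]; move/hl: lr => [Hr rB].
  apply: (pencil_sub m0 hH hB (svalP p) (svalP q) (svalP r) Hp Hq Hr pB qB rB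
    (has_dim_closed hW)) => //.
  by move=> eq; apply: pq; apply: Sub_ext.
split.
  have [U [hU hint]] := complement he hes hW hmk.
  exists (exist _ U hU) => -[x [nx [Ux Wx]]].
  by move: nx; rewrite (hint x Ux Wx) eqxx.
move=> l [H [B [hH [hB [HB hl]]]]].
have [U [hU [HU [UB MU]]]] := pencil_meet m0 hmk hH hB HB hW.
by exists (exist _ U hU); split => //; apply/hl.
Qed.

End Geom.

Lemma meet_sym (U W : V -> Prop) : meet U W -> meet W U.
Proof. by move=> [x [nx [Ux Wx]]]; exists x. Qed.

Lemma meet_symE (U W : V -> Prop) : meet U W <-> meet W U.
Proof. by split; apply: meet_sym. Qed.

End LA.

Lemma hyper_ext (P : Type) (L : (P -> Prop) -> Prop) (X Y : P -> Prop) :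
  (forall p, X p <-> Y p) -> is_hyperplane L X -> is_hyperplane L Y.
Proof.
move=> XY [sub [[p np] meets]]; split.
  move=> l hl [a [b [ab [la [lb [Ya Yb]]]]]] r lr; apply/XY.
  by apply: (sub l hl) => //; exists a, b; rewrite !XY.
split; first by exists p; rewrite -XY.
by move=> l /meets [q [lq Xq]]; exists q; rewrite -XY.
Qed.

Theorem proposition4p17 (K : unitRingType) (V : lmodType K) (n k1 k2 : nat) :
  is_division_ring K ->
  has_dim (fun _ : V => True) n ->
  (1 < k1)%N -> (k1 < n - 1)%N -> (k1 + k2)%N = n ->
  let L := segre_line (@gr_line K V k1) (@gr_line K V k2) in
  is_hyperplane L (@Hk K V k1 k2) /\
  non_degenerate (@gr_line K V k1) (@gr_line K V k2) (@Hk K V k1 k2) /\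
  ~ spiky L (@Hk K V k1 k2).
Proof.
move=> hK [e [he hes']] k1gt k1lt hk L.
have hes : forall x, sp e x := fun x => proj1 (hes' x) I.
have k10 : (0 < k1)%N by lia.
have k20 : (0 < k2)%N by lia.
have k21 : (k2 + k1 = n)%N by lia.
have HkM := Hk_iff hK he hes (k1:=k1) (k2:=k2).
have S1 := fun W (hW : has_dim W k2) => sec_hyper hK he hes k10 hk hW.
have S2 := fun W (hW : has_dim W k1) => sec_hyper hK he hes k20 k21 hW.
have hyp : is_hyperplane L (@Hk K V k1 k2).
  split.
    move=> l [[l1 [b [hl1 hl]]]|[a [l2 [hl2 hl]]]] [p [q [pq [lp [lq [Xp Xq]]]]]] r lr.
    + move/hl: lp => [l1p p2]; move/hl: lq => [l1q q2]; move/hl: lr => [l1r r2].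
      have [sub _] := S1 _ (svalP b).
      apply/HkM; rewrite r2.
      apply: (sub l1 hl1) => //.
      exists p.1, q.1; split.
        by move=> e1; apply: pq; apply: injective_projections; rewrite ?e1 ?p2 ?q2.
      split => //; split => //; split; [rewrite -p2; exact/HkM | rewrite -q2; exact/HkM].
    + move/hl: lp => [p1 l2p]; move/hl: lq => [q1 l2q]; move/hl: lr => [r1 l2r].
      have [sub _] := S2 _ (svalP a).
      apply/HkM; rewrite r1 meet_symE.
      apply: (sub l2 hl2) => //.
      exists p.2, q.2; split.
        by move=> e1; apply: pq; apply: injective_projections; rewrite ?e1 ?p1 ?q1.
      split => //; split => //; split; [rewrite -p1 -meet_symE; exact/HkM | rewrite -q1 -meet_symE; exact/HkM].
  split.
    have [U2 hU2] := point_exists hK he (m := k2) ltac:(lia).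
    have [_ [[p1 np1] _]] := S1 _ hU2.
    by exists (p1, exist _ U2 hU2); move/HkM.
  move=> l [[l1 [b [hl1 hl]]]|[a [l2 [hl2 hl]]]].
    have [_ [_ meets]] := S1 _ (svalP b).
    have [p1 [l1p Mp]] := meets _ hl1.
    by exists (p1, b); split; [apply/hl | apply/HkM].
  have [_ [_ meets]] := S2 _ (svalP a).
  have [p2 [l2p Mp]] := meets _ hl2.
  by exists (a, p2); split; [apply/hl | apply/HkM; apply: meet_sym].
split => //.
split.
  split => //.
  move=> a; split.
    apply: (hyper_ext _ (S1 _ (svalP a.2))) => p.
    by rewrite /section1 HkM.
  apply: (hyper_ext _ (S2 _ (svalP a.1))) => p.
  by rewrite /section2 HkM meet_symE.
have n0 : (0 < n)%N by lia.
pose x := e (Ordinal n0).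
have nx : x != 0 by apply: ind_nz.
pose v0 := fun _ : 'I_0 => (0 : V).
have nsx : ~ sp v0 x by move=> [c hc]; move: nx; rewrite hc lc_ord0 eqxx.
have hv1 := ind_ext hK (@ind_ord0 _ _ v0) nsx.
have [y ny] : exists y, ~ sp (ext v0 x) y.
  apply: NNPP => H; have := card_geV hK he (v := ext v0 x)
    (fun z => NNPP _ (fun nz => H (ex_intro _ z nz))).
  by rewrite card_sum !card_ord; lia.
have hF := ind_ext hK hv1 ny.
have nyx : forall a, y != a *: x.
  move=> a; apply/eqP => ya; apply: ny.
  exists (fun s => match s with inl _ => 0 | inr _ => a end).
  by rewrite lc_ext /= lc_ord0 add0r.
have c2 : #|{: ('I_0 + 'I_1) + 'I_1}| = 2 by rewrite !card_sum !card_ord.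
have a1 : (k1 - #|{: ('I_0 + 'I_1) + 'I_1}| <= k1)%N by apply: leq_subr.
have a2 : (#|{: ('I_0 + 'I_1) + 'I_1}| <= k1)%N by rewrite c2; lia.
have b1 : (k2 - #|{: ('I_0 + 'I_1) + 'I_1}| <= k2)%N by apply: leq_subr.
have b2 : (#|{: ('I_0 + 'I_1) + 'I_1}| <= k2)%N by rewrite c2; lia.
have [U1 [hU1 U1F]] := extend_dim hK he (m := k1) ltac:(lia) a1 hF a2.
have [U2 [hU2 U2F]] := extend_dim hK he (m := k2) ltac:(lia) b1 hF b2.
have U1x : U1 x := U1F (inl (inr ord0)).
have U1y : U1 y := U1F (inr ord0).
have U2x : U2 x := U2F (inl (inr ord0)).
have U2y : U2 y := U2F (inr ord0).
pose P := (exist _ U1 hU1 : Defs.Sub V k1, exist _ U2 hU2 : Defs.Sub V k2).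
move=> /(_ P) [].
  by apply/HkM; exists x.
move=> q [nq [l [[[l1 [b [hl1 hl]]]|[a [l2 [hl2 hl]]]] [lP lq]]]].
  move/hl: lP => [l1P P2]; move/hl: lq => [l1q q2].
  move: hl1 => [H [B [hH [hB [HB hmem]]]]].
  move/hmem: l1P => [HU1 _]; move/hmem: l1q => [Hq _].
  have := hyper_meet hK k10 hH hU1 HU1 (has_dim_closed hU2) U1x U1y U2x U2y nx nyx.
  move=> [z [nz [Hz U2z]]]; apply: nq; apply/HkM.
  exists z; split => //; split; first exact: Hq.
  by rewrite q2 -P2.
move/hl: lP => [P1 l2P]; move/hl: lq => [q1 l2q].
move: hl2 => [H [B [hH [hB [HB hmem]]]]].
move/hmem: l2P => [HU2 _]; move/hmem: l2q => [Hq _].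
have := hyper_meet hK k20 hH hU2 HU2 (has_dim_closed hU1) U2x U2y U1x U1y nx nyx.
move=> [z [nz [Hz U1z]]]; apply: nq; apply/HkM.
exists z; split => //; split; last exact: Hq.
by rewrite q1 -P1.
Qed.
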